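(* In every identically ordered instance in which $n$ agents with equal responsibilities have additive disvaluations over chores $e_1,\ldots,e_m$ (with $c_i(e_j)\ge c_i(e_k)$ for all agents $i$ and all $j<k$), the allocation produced by AlgChores gives every agent $i$ a bundle of disvalue at most $\frac{4n-1}{3n}APS_i$.
   Context: $APS_i=\max_p\min\{c_i(S):\sum_{e\in S}p_e\ge1/n\}$ over nonnegative price vectors summing to $1$. AlgChores (on identically ordered instances): start with empty bundles $B_1,\ldots,B_n$; for $r=1,\ldots,m$, add chore $e_r$ to the bundle of an agent who envies no other agent (agent $i$ envies $j$ if $c_i(B_i)>c_i(B_j)$), and then, while the envy graph contains a cycle, rotate the bundles along the cycle so that each agent on it receives the bundle she envied. *)

(* Defs.v *)
From HB Require Import structures.
From mathcomp Require Import all_boot all_order all_algebra.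
From mathcomp Require Import classical_sets boolp reals.
Set Implicit Arguments. Unset Strict Implicit. Unset Printing Implicit Defensive.
Import Order.TTheory GRing.Theory Num.Theory.
Local Open Scope ring_scope.
Local Open Scope classical_set_scope.

Section Chores.
Variables (R : realType) (n m : nat).
(* c i e = disvaluation of chore e (the chore e_{e+1}) for agent i. *)
Variable c : 'I_n -> 'I_m -> R.

Definition cost (i : 'I_n) (S : {set 'I_m}) : R := \sum_(e in S) c i e.

Definition price_vector (p : 'I_m -> R) : Prop :=
  (forall e, 0 <= p e) /\ \sum_(e < m) p e = 1.

(* min { c_i(S) : sum_{e in S} p_e >= 1/n }; the full set is always feasible
   for a price vector, so its cost is a valid initial value of the min. *)
Definition aps_val (i : 'I_n) (p : 'I_m -> R) : R :=
  \big[Order.min/cost i [set: 'I_m]%SET]_(S : {set 'I_m} | n%:R^-1 <= \sum_(e in S) p e)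
     cost i S.

(* APS_i = max over price vectors of aps_val (written as sup; the max is attained) *)
Definition APS (i : 'I_n) : R :=
  sup [set v | exists p, price_vector p /\ v = aps_val i p].

Definition bundles := 'I_n -> {set 'I_m}.

Definition empty_bundles : bundles := fun _ => finset.set0.

Definition envies (B : bundles) : rel 'I_n :=
  fun i j => cost i (B j) < cost i (B i).

Definition envies_no_one (B : bundles) (i : 'I_n) : Prop :=
  forall j, ~~ envies B i j.

Definition envy_acyclic (B : bundles) : Prop :=
  forall s : seq 'I_n, s != [::] -> ~~ cycle (envies B) s.

Definition rotate_step (B B' : bundles) : Prop :=
  exists s : seq 'I_n, [/\ s != [::], uniq s, cycle (envies B) s &
     B' = fun a => if a \in s then B (next s a) else B a].

(* "while the envy graph contains a cycle, rotate": any finite sequence of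
   rotations ending in an acyclic envy graph *)
Inductive rotate_until_acyclic : bundles -> bundles -> Prop :=
| rua_done B : envy_acyclic B -> rotate_until_acyclic B B
| rua_step B B' B'' : rotate_step B B' -> rotate_until_acyclic B' B'' ->
    rotate_until_acyclic B B''.

Definition add_chore (B : bundles) (k : 'I_n) (e : 'I_m) : bundles :=
  fun a => if a == k then (e |: B a)%SET else B a.

(* algchores_run r B : B is a possible state of AlgChores after the
   first r rounds (all nondeterministic choices allowed). *)
Inductive algchores_run : nat -> bundles -> Prop :=
| run0 : algchores_run 0 empty_bundles
| runS r (Hr : (r < m)%N) B k B' :
    algchores_run r B -> envies_no_one B k ->
    rotate_until_acyclic (add_chore B k (Ordinal Hr)) B' ->
    algchores_run r.+1 B'.

End Chores.

(* Main.v *)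
Require Import Defs.
From HB Require Import structures.
From mathcomp Require Import all_boot all_order all_algebra.
From mathcomp Require Import classical_sets boolp reals.
From mathcomp Require Import lra.
Import Order.TTheory GRing.Theory Num.Theory.
Local Open Scope ring_scope.

Section Aux.
Variables (R : realType) (n m : nat) (c : 'I_n -> 'I_m -> R).
Hypothesis Hn : (0 < n)%N.
Hypothesis Hnonneg : forall i e, 0 <= c i e.

Lemma single_le (f : 'I_m -> R) (S : {set 'I_m}) e :
  (forall e, 0 <= f e) -> e \in S -> f e <= \sum_(e' in S) f e'.
Proof.
move=> f0 eS; rewrite (bigD1 e) //= lerDl; apply: sumr_ge0 => j _; exact: f0.
Qed.

Lemma pair_le (f : 'I_m -> R) (S : {set 'I_m}) e e' :
  (forall e, 0 <= f e) -> e \in S -> e' \in S -> e' != e ->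
  f e + f e' <= \sum_(e'' in S) f e''.
Proof.
move=> f0 eS e'S ne; rewrite (bigD1 e) //= lerD2l.
rewrite (bigD1 e') /=; last by rewrite e'S ne.
rewrite lerDl; apply: sumr_ge0 => j _; exact: f0.
Qed.

Arguments single_le {f S e}.
Arguments pair_le {f S e e'}.

Lemma aps_lb i (w : 'I_m -> R) (v : R) :
  (forall e, 0 <= w e) -> 0 < \sum_e w e ->
  (forall S : {set 'I_m}, (\sum_e w e) / n%:R <= \sum_(e in S) w e -> v <= cost c i S) ->
  v <= APS c i.
Proof.
move=> w0 Wpos Hv.
set W := \sum_e w e in Wpos Hv.
pose p e := w e / W.
have pv : price_vector p.
  split; first by move=> e; rewrite /p divr_ge0 // ltW.
  by rewrite /p -mulr_suml mulfV // gt_eqF.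
have ub : forall u, [set v | exists p, price_vector p /\ v = aps_val c i p]%classic u ->
   u <= cost c i [set: 'I_m]%SET.
  move=> u [q [_ ->]]; rewrite /aps_val; apply/bigmin_leP; by left.
have H : v <= aps_val c i p.
  apply/bigmin_geP; split.
    apply: Hv; rewrite (_ : \sum_(e in [set: 'I_m]%SET) w e = W); last first.
      by apply: eq_bigl => e; rewrite finset.in_setT.
    rewrite ler_pdivrMr ?ltr0n //.
    have h1 : 1 <= n%:R :> R by rewrite ler1n.
    nra.
  move=> S HS; apply: Hv.
  move: HS; rewrite /p -mulr_suml ler_pdivlMr // mulrC //.
apply: le_trans H _; apply: ub_le_sup.
  by exists (cost c i [set: 'I_m]%SET) => u Hu; exact: ub.
by exists p; split.
Qed.


Definition Inv (B : bundles n m) (r : nat) :=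
  forall e : 'I_m, (\sum_j ((e \in B j) : nat))%N = (e < r)%N.

Lemma sum_bundles (B : bundles n m) r (w : 'I_m -> R) :
  Inv B r -> \sum_j \sum_(e in B j) w e = \sum_(e : 'I_m | (e < r)%N) w e.
Proof.
move=> H.
transitivity (\sum_(j : 'I_n) \sum_(e : 'I_m) (((e \in B j) : nat)%:R * w e)).
  apply: eq_bigr => j _; rewrite big_mkcond /=; apply: eq_bigr => e _.
  by case: (e \in B j); rewrite ?mul1r ?mul0r.
rewrite exchange_big /= [RHS]big_mkcond /=; apply: eq_bigr => e _.
rewrite -mulr_suml -natr_sum H.
by case: (e < r)%N; rewrite ?mul1r ?mul0r.
Qed.

Lemma mem_lt (B : bundles n m) r j e : Inv B r -> e \in B j -> (e < r)%N.
Proof.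
move=> H eB; move: (H e); rewrite (bigD1 j) //= eB; case: (e < r)%N => //.
Qed.

Lemma APS_ge0 i : 0 <= APS c i.
Proof.
have [m0|mpos] := posnP m.
  rewrite /APS.
  have -> : [set v | exists p, price_vector p /\ v = aps_val c i p]%classic = set0.
    apply/seteqP; split => // u [p [[_ h] _]].
    move: h; rewrite big1 => [/eqP|e _]; first by rewrite eq_sym oner_eq0.
    by have := ltn_ord e; rewrite {2}m0.
  by rewrite sup0.
apply: (@aps_lb i (fun _ => 1)) => //.
  by rewrite sumr_const card_ord ltr0n.
move=> S _; rewrite /cost; apply: sumr_ge0 => e _; exact: Hnonneg.
Qed.

Hypothesis Hord : forall i (j k : 'I_m), (j < k)%N -> c i k <= c i j.

Lemma key (B : bundles n m) r (Hr : (r < m)%N) i :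
  Inv B r -> (forall j, cost c i (B i) <= cost c i (B j)) ->
  cost c i (B i) + c i (Ordinal Hr) <= ((4 * n - 1)%:R / (3 * n)%:R) * APS c i.
Proof.
move=> Hinv Hmin.
have hx : forall e : 'I_m, (e <= r)%N -> c i (Ordinal Hr) <= c i e.
  move=> e; rewrite leq_eqVlt => /orP [/eqP er | er].
    by have -> : e = Ordinal Hr by apply: val_inj.
  exact: (Hord i e (Ordinal Hr) er).
have A0 := APS_ge0 i.
have y0 : 0 <= cost c i (B i) by apply: sumr_ge0 => e _; exact: Hnonneg.
have x0 : 0 <= c i (Ordinal Hr) := Hnonneg _ _.
set y := cost c i (B i) in Hmin y0 *.
set x := c i (Ordinal Hr) in hx x0 *.
set A := APS c i in A0 *.
set Ctot := \sum_e c i e.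
have F1 : n%:R * y + x <= Ctot.
  have -> : n%:R * y = \sum_(j : 'I_n) y by rewrite sumr_const card_ord mulr_natl.
  apply: (@le_trans _ _ (\sum_(e : 'I_m | (e < r)%N) c i e + x)).
    rewrite lerD2r -(@sum_bundles B r (c i) Hinv); apply: ler_sum => j _; exact: Hmin.
  rewrite /Ctot [leRHS](bigID (fun e : 'I_m => (e < r)%N)) /= lerD2l.
  rewrite (bigD1 (Ordinal Hr)) /= ?ltnn // lerDl; apply: sumr_ge0 => e _; exact: Hnonneg.
have F2 : Ctot <= n%:R * A.
  have [Cpos|Cle] := ltP 0 Ctot.
    have := @aps_lb i (c i) (Ctot / n%:R) (Hnonneg i) Cpos (fun S h => h).
    by rewrite ler_pdivrMr ?ltr0n // mulrC.
  by apply: le_trans Cle _; apply: mulr_ge0 => //; rewrite ler0n.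
have HA : y + x <= A \/ 3 * x <= A.
  have [ypos|yle] := ltP 0 y; last first.
    left.
    have m0 : (0 < m)%N by apply: leq_ltn_trans (leq0n r) Hr.
    pose e0 := Ordinal m0.
    have W1 : \sum_e ((e == e0)%:R : R) = 1.
      rewrite (bigD1 e0) //= ?eqxx big1 ?addr0 // => e /negbTE -> //.
    apply: (@le_trans _ _ (c i e0)).
      have := hx e0 (leq0n r); lra.
    apply: (@aps_lb i (fun e => (e == e0)%:R)) => //.
    - by rewrite W1 ltr01.
    move=> S; rewrite W1 mul1r => h.
    case: (boolP (e0 \in S)) => [e0S|nS].
      by apply: single_le => //; exact: Hnonneg.
    exfalso; move: h; rewrite big1 => [h|e eS]; last first.
      by have -> : (e == e0) = false by apply/negbTE; apply: contraNneq nS => <-.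
    have : 0 < n%:R^-1 :> R by rewrite invr_gt0 ltr0n.
    lra.
  pose q (e : 'I_m) : R := if (e <= r)%N then (if c i e < y then 1 else 2) else 0.
  have q0 : forall e, 0 <= q e.
    by move=> e; rewrite /q; case: ifP => _ //; case: ifP => _.
  have inr : forall j e, e \in B j -> (e <= r)%N.
    by move=> j e /(@mem_lt B r j e Hinv)/ltnW.
  have Bq : forall j, 2 <= \sum_(e in B j) q e.
    move=> j; have cj := Hmin j.
    case: (pickP [pred e | (e \in B j) && ~~ (c i e < y)]) => [e /andP [eB he] | none].
      apply: le_trans (single_le q0 eB); by rewrite /q (inr j e eB) (negbTE he).
    have qB : \sum_(e in B j) q e = #|B j|%:R.
      rewrite -sum1_card natr_sum; apply: eq_bigr => e eB.
      rewrite /q (inr j e eB); have := none e; rewrite /= eB /= => /negbFE -> //.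
    rewrite qB (ler_nat R 2).
    case: (ltngtP #|B j| 1) => // h.
      move: h; rewrite ltnS leqn0 => /eqP/cards0_eq Bj0.
      by move: cj; rewrite Bj0 /cost big_set0; lra.
    move/eqP: h => /cards1P [e Be].
    have := none e; rewrite /= Be finset.in_set1 eqxx /= => /negbFE.
    by move: cj; rewrite Be /cost big_set1; lra.
  have Wq : 2 * n%:R + 1 <= \sum_e q e.
    rewrite (bigID (fun e : 'I_m => (e < r)%N)) /= lerD //.
      rewrite -(@sum_bundles B r q Hinv).
      apply: (@le_trans _ _ (\sum_(j : 'I_n) 2)).
        by rewrite sumr_const card_ord mulr_natr.
      by apply: ler_sum => j _; exact: Bq.
    rewrite (bigD1 (Ordinal Hr)) /= ?ltnn //.
    apply: (@le_trans _ _ (q (Ordinal Hr))).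
      by rewrite /q /= leqnn; case: ifP => _ //; lra.
    rewrite lerDl; apply: sumr_ge0 => e _; exact: q0.
  have claim : forall S : {set 'I_m}, 2 < \sum_(e in S) q e -> y + x <= cost c i S \/ 3 * x <= cost c i S.
    move=> S hS.
    case: (pickP [pred e | (e \in S) && (e <= r)%N && ~~ (c i e < y)]) =>
        [e /andP [/andP [eS er] he] | none].
      case: (pickP [pred e' | (e' \in S) && (e' <= r)%N && (e' != e)]) =>
          [e' /andP [/andP [e'S e'r] ne] | none'].
        left; apply: le_trans (pair_le (Hnonneg i) eS e'S ne).
        by apply: lerD; [rewrite leNgt | exact: hx].
      exfalso; move: hS; rewrite (bigD1 e) //= big1 => [|e' /andP [e'S ne]].
        by rewrite /q er (negbTE he) addr0 ltxx.
      have := none' e'; rewrite /= e'S ne andbT /= => e'r.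
      by rewrite /q e'r.
    right.
    set N := (\sum_(e in S) ((e <= r)%N : nat))%N.
    have qS : \sum_(e in S) q e = N%:R.
      rewrite /N natr_sum; apply: eq_bigr => e eS; rewrite /q; case: ifP => er //=.
      by have := none e; rewrite /= eS er /= => /negbFE ->.
    have N3 : (3 <= N)%N by rewrite -(ltr_nat R 2) -qS.
    have hc : x * N%:R <= cost c i S.
      rewrite /cost /N natr_sum mulr_sumr; apply: ler_sum => e eS.
      by case: (boolP (e <= r)%N) => er /=; rewrite ?mulr1 ?mulr0; [exact: hx | exact: Hnonneg].
    apply: le_trans hc; rewrite mulrC ler_wpM2l //.
    by rewrite (ler_nat R 3 N).
  have Wpos : 0 < \sum_e q e.
    have h0 : 0 <= n%:R :> R by rewrite ler0n.
    by apply: lt_le_trans Wq; lra.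
  have HS : forall S : {set 'I_m}, (\sum_e q e) / n%:R <= \sum_(e in S) q e ->
      y + x <= cost c i S \/ 3 * x <= cost c i S.
    move=> S h; apply: claim; apply: lt_le_trans h.
    by rewrite ltr_pdivlMr ?ltr0n //; lra.
  have [hle|hlt] := lerP (y + x) (3 * x).
    left; apply: (@aps_lb i q _ q0 Wpos) => S /HS [] //; exact: le_trans hle.
  right; apply: (@aps_lb i q _ q0 Wpos) => S /HS [] // h; apply: le_trans h; exact: ltW.
have n41 : (1 <= 4 * n)%N by rewrite muln_gt0.
rewrite natrB // !natrM.
have N1 : 1 <= n%:R :> R by rewrite ler1n.
set N := n%:R in N1 F1 F2 *.
rewrite mulrAC ler_pdivlMr; last by lra.
case: HA => HA.
  have : 0 <= (N - 1) * A by apply: mulr_ge0 => //; lra.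
  nra.
have : 0 <= (N - 1) * (A - 3 * x) by apply: mulr_ge0; lra.
nra.
Qed.

Lemma rua_inv B B' r : rotate_until_acyclic c B B' -> Inv B r ->
  Inv B' r /\ forall i, cost c i (B' i) <= cost c i (B i).
Proof.
move=> H; elim: H => [B0 _ | B0 B1 B2 [s [sn us cs ->]] _ IH] HI.
  by split => // i.
have HI1 : Inv (fun a => if a \in s then B0 (next s a) else B0 a) r.
  move=> e; rewrite -(HI e) [RHS](reindex_inj (can_inj (prev_next us))) /=.
  by apply: eq_bigr => j _; case: ifP => // js; rewrite next_nth js.
have [HI2 H2] := IH HI1.
split => // i; apply: le_trans (H2 i) _ => /=; case: ifP => // ins.
exact: ltW (next_cycle cs ins).
Qed.

Lemma run_inv r B : algchores_run c r B ->
  Inv B r /\ forall i, cost c i (B i) <= ((4 * n - 1)%:R / (3 * n)%:R) * APS c i.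
Proof.
elim => [| r0 Hr B0 k B1 _ [HI Hb] Hk Hrot].
  split; first by move=> e; rewrite big1 // => j _; rewrite /empty_bundles finset.in_set0.
  move=> i; rewrite /cost /empty_bundles big_set0; apply: mulr_ge0; last exact: APS_ge0.
  by apply: divr_ge0; rewrite ler0n.
have nin : forall j, Ordinal Hr \notin B0 j.
  by move=> j; apply/negP => /(@mem_lt B0 r0 j _ HI); rewrite ltnn.
set Badd := add_chore B0 k (Ordinal Hr).
have HIa : Inv Badd r0.+1.
  move=> e; rewrite (bigD1 k) //= /Badd /add_chore eqxx.
  rewrite (eq_bigr (fun j => ((e \in B0 j) : nat))); last by move=> j /negbTE ->.
  have := HI e; rewrite (bigD1 k) //= => He.
  rewrite finset.in_setU1; case: (eqVneq e (Ordinal Hr)) => [-> | ne] /=.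
    have := HI (Ordinal Hr); rewrite (bigD1 k) //= (negbTE (nin k)) ltnn add0n => ->.
    by rewrite ltnSn.
  have hne : ((e : nat) == r0) = false.
    by apply/negbTE; apply: contra ne => /eqP h; apply/eqP/val_inj.
  rewrite He; congr (nat_of_bool _); apply/idP/idP => [h|]; first exact: leqW.
  by rewrite ltnS leq_eqVlt hne.
have Hba : forall i, cost c i (Badd i) <= ((4 * n - 1)%:R / (3 * n)%:R) * APS c i.
  move=> i; rewrite /Badd /add_chore; case: eqP => [-> | _]; last exact: Hb.
  rewrite /cost big_setU1 ?nin //= addrC; apply: key => // j.
  by move: (Hk j); rewrite /envies -leNgt.
have [HI' Hc] := @rua_inv Badd B1 r0.+1 Hrot HIa.
by split => // i; apply: le_trans (Hc i) (Hba i).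
Qed.

End Aux.

Theorem lemma7 (R : realType) (n m : nat) (c : 'I_n -> 'I_m -> R)
  (Hn : (0 < n)%N)
  (Hnonneg : forall i e, 0 <= c i e)
  (Hord : forall i (j k : 'I_m), (j < k)%N -> c i k <= c i j)
  (B : bundles n m) :
  algchores_run c m B ->
  forall i : 'I_n, cost c i (B i) <= ((4 * n - 1)%:R / (3 * n)%:R) * APS c i.
Proof.
move=> HB i; have [_ H] := @run_inv R n m c Hn Hnonneg Hord m B HB; exact: H.
Qed.
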